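(* Let $r\geq 1$ and $n_1,\ldots,n_r>1$ be integers, let $R=\mathbb{Z}_{n_1}\oplus\cdots\oplus \mathbb{Z}_{n_r}$ be the direct sum of the residue class rings $\mathbb{Z}_{n_1},\ldots,\mathbb{Z}_{n_r}$, let $\mathcal{S}_R$ be the multiplicative semigroup of the ring $R$, and let ${\rm U}(\mathcal{S}_R)$ be the group of units of $\mathcal{S}_R$. Then $${\rm D}({\rm U}(\mathcal{S}_R))+P_2\leq {\rm D}(\mathcal{S}_R)\leq {\rm D}({\rm U}(\mathcal{S}_R))+\delta,$$ where $P_2=\#\{i\in [1,r]: 2 \parallel n_i\}$ (i.e. $2\mid n_i$ but $4\nmid n_i$) and $\delta=\#\{i\in [1,r]: 2\mid n_i\}$.
   Context: For a finite commutative semigroup $\mathcal{S}$ (with operation written $+$), a sequence $T=a_1a_2\cdots a_\ell$ of elements of $\mathcal{S}$ (a finite multiset; order irrelevant) is called reducible if there is a proper subsequence $T'$ of $T$ (possibly empty, a sub-multiset different from $T$) whose sum equals the sum of all terms of $T$; the sum of the empty sequence is the identity element of $\mathcal{S}$ (here $\mathcal{S}$ has an identity). The Davenport constant ${\rm D}(\mathcal{S})$ is the smallest positive integer $\ell$ such that every sequence of elements of $\mathcal{S}$ of length at least $\ell$ is reducible. For a finite abelian group $G$ this coincides with the classical Davenport constant: the smallest $\ell$ such that every sequence of $\ell$ elements of $G$ has a nonempty subsequence summing to the identity. The semigroup $\mathcal{S}_R$ has as its operation the ring multiplication of $R$ (written additively as $+$ in the semigroup), with identity element $(\overline{1},\ldots,\overline{1})$;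 ${\rm U}(\mathcal{S}_R)$ is the set of elements having an inverse under this operation. *)

(* Defs.v *)
From mathcomp Require Import all_boot all_algebra.
Set Implicit Arguments. Unset Strict Implicit. Unset Printing Implicit Defensive.
Import GRing.Theory.

(* Sequences are restricted to elements of A
   (A = predT for the whole semigroup, A = units for the unit group). *)
Section Davenport.
Variables (T : finType) (op : T -> T -> T) (e : T).

Definition seqsum (s : seq T) : T := foldr op e s.

Definition reducible (s : seq T) : Prop :=
  exists m : bitseq, [/\ size m = size s, ~~ all id m & seqsum (mask m s) = seqsum s].

Definition all_long_reducible (A : {pred T}) (l : nat) : Prop :=
  forall s : seq T, all (mem A) s -> l <= size s -> reducible s.

Definition is_davenport (A : {pred T}) (l : nat) : Prop :=
  [/\ 0 < l, all_long_reducible A l &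
      forall l', 0 < l' -> all_long_reducible A l' -> l <= l'].

Definition is_unit (x : T) : bool := [exists y, op x y == e].

End Davenport.

Definition ringR (r : nat) (n : 'I_r -> nat) := {dffun forall i : 'I_r, 'Z_(n i)}.

Definition mulR (r : nat) (n : 'I_r -> nat) (x y : ringR n) : ringR n :=
  [ffun i => (x i * y i)%R].

Definition oneR (r : nat) (n : 'I_r -> nat) : ringR n := [ffun i => 1%R].

(* Main.v *)
Require Import Defs.
From mathcomp Require Import all_boot all_algebra zify ring.
From Stdlib Require Classical_Prop.
Set Implicit Arguments. Unset Strict Implicit. Unset Printing Implicit Defensive.

Lemma copr_crit a b : 0 < b ->
  (forall p, prime p -> p %| b -> ~~ (p %| a)) -> coprime a b.
Proof.
move=> b0 H; rewrite /coprime.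
case: (ltngtP (gcdn a b) 1) => [|g1|]//.
  by rewrite ltnS leqn0 => /eqP g0; move: (gcdn_gt0 a b); rewrite g0 b0 orbT.
have pp := pdiv_prime g1; have hd := pdiv_dvd (gcdn a b).
by move: (H _ pp (dvdn_trans hd (dvdn_gcdr _ _))); rewrite (dvdn_trans hd (dvdn_gcdl _ _)).
Qed.

Lemma lift_unit n d c : 0 < n -> d %| n -> coprime c d ->
  exists u, coprime u n /\ u = c %[mod d].
Proof.
move=> n0 dn cd.
set t := \prod_(p <- primes n | ~~ (p %| c)) p.
exists (c + d * t); split; last by rewrite addnC mulnC modnMDl.
apply: (copr_crit n0) => p pp pn.
have pin : p \in primes n by rewrite mem_primes pp n0 pn.
case pc: (p %| c).
  have pd : ~~ (p %| d).
    apply/negP => pd; move/eqP: cd => cd1.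
    have : p %| gcdn c d by rewrite dvdn_gcd pc pd.
    by rewrite cd1 Euclid_dvd1.
  have pt : ~~ (p %| t).
    rewrite /t Euclid_dvd_prod // big_has_cond; apply/hasPn => q qin.
    apply/negP => /andP[qc pq].
    move: qin; rewrite mem_primes => /and3P[qp _ _].
    by move: pq; rewrite dvdn_prime2 // => /eqP pq; rewrite -pq pc in qc.
  by rewrite dvdn_addr // Euclid_dvdM // negb_or pd pt.
have pt : p %| t.
  by rewrite /t Euclid_dvd_prod // big_has_cond; apply/hasP; exists p => //=; rewrite pc dvdnn.
by rewrite dvdn_addl ?pc // dvdn_mull.
Qed.

Lemma coprime_div_gcd z n : 0 < n -> coprime (z %/ gcdn z n) (n %/ gcdn z n).
Proof.
move=> n0; have G0 : 0 < gcdn z n by rewrite gcdn_gt0 n0 orbT.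
rewrite /coprime -(eqn_pmul2r G0) mul1n muln_gcdl !divnK ?dvdn_gcdl ?dvdn_gcdr //.
Qed.

Lemma stab_mod z W n : 0 < n -> 0 < W ->
  (z * W == z %[mod n]) = (n %/ gcdn z n %| W.-1).
Proof.
move=> n0 W0.
have -> : z * W = z + z * W.-1 by rewrite -{1}(prednK W0) mulnS.
rewrite -[X in _ == X %[mod _]](addn0 z) eqn_modDl mod0n.
change ((n %| z * W.-1) = (n %/ gcdn z n %| W.-1)).
have G0 : 0 < gcdn z n by rewrite gcdn_gt0 n0 orbT.
have cp := coprime_div_gcd z n0.
set G := gcdn z n in G0 cp *.
have en : n = n %/ G * G by rewrite divnK // /G dvdn_gcdr.
have ez : z = z %/ G * G by rewrite divnK // /G dvdn_gcdl.
rewrite {1}en {1}ez mulnAC dvdn_pmul2r // Gauss_dvdr //.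
by rewrite coprime_sym.
Qed.

Lemma Kp p q d : prime p -> p %| q -> 0 < q ->
  (odd p || (p %| d) || (p %| q %/ p)) ->
  exists k, ~~ (q %| k) /\ coprime (1 + d * k) q.
Proof.
move=> pp pq q0 hyp.
set s := q %/ p.
have qs : q = s * p by rewrite divnK.
have s0 : 0 < s by move: q0; rewrite qs muln_gt0 => /andP[].
have main : forall j, ~~ (p %| 1 + d * (s * j)) -> ~~ (p %| j) ->
    exists k, ~~ (q %| k) /\ coprime (1 + d * k) q.
  move=> j h1 h2; exists (s * j); split.
    by rewrite qs dvdn_pmul2l.
  apply: (copr_crit q0) => r rp rq.
  case: (eqVneq r p) => [->//|rnp].
  have rs : r %| s.
    move: rq; rewrite qs Euclid_dvdM // => /orP[//|].
    by rewrite dvdn_prime2 // (negbTE rnp).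
  by rewrite dvdn_addl ?Euclid_dvd1 // dvdn_mull // dvdn_mulr.
case H1: (p %| 1 + d * (s * 1)).
  have pds : ~~ (p %| d * s).
    by apply/negP => pds; move: H1; rewrite muln1 dvdn_addl // Euclid_dvd1.
  have op : odd p.
    move: hyp; rewrite -/s; case: (odd p) => //=.
    move=> /orP[pd|ps]; move: pds; first by rewrite dvdn_mulr.
    by rewrite dvdn_mull.
  apply: (main 2).
    apply/negP => H2.
    have : p %| 1 + d * (s * 2) + 1.
      have -> : 1 + d * (s * 2) + 1 = 2 * (1 + d * (s * 1)) by ring.
      by rewrite dvdn_mull.
    by rewrite dvdn_addr // Euclid_dvd1.
  apply/negP => p2; have := dvdn_leq (isT : 0 < 2) p2.
  have := prime_gt1 pp; move: op; case: p {pp pq hyp H1 pds main p2 s qs s0} => [|[|[|p]]] //.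
apply: (main 1); first by rewrite H1.
by rewrite Euclid_dvd1.
Qed.

Lemma Kq q d : 1 < q -> 0 < d -> ~~ ((q == 2) && odd d) ->
  exists k, ~~ (q %| k) /\ coprime (1 + d * k) q.
Proof.
move=> q1 d0 nex.
have q0 : 0 < q by apply: ltnW.
have pp := pdiv_prime q1; have pq := pdiv_dvd q.
case E: (odd (pdiv q) || (pdiv q %| d) || (pdiv q %| q %/ pdiv q)).
  exact: Kp pp pq q0 E.
move: E => /norP [/norP [op pd] ps].
have p2 : pdiv q = 2 by case: (even_prime pp) => // o; rewrite o in op.
rewrite p2 in pd ps pq.
set s := q %/ 2 in ps.
have qs : q = s * 2 by rewrite divnK.
have od : odd d by move: pd; rewrite dvdn2 negbK.
have os : odd s by move: ps; rewrite dvdn2 negbK.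
case: (eqVneq s 1) => [s1|s1].
  by move: nex; rewrite qs s1 od.
have s1' : 1 < s by move: os s1; case: s {ps qs} => [|[|]].
have pp' := pdiv_prime s1'; have ps' := pdiv_dvd s.
apply: (Kp pp' (dvdn_trans ps' _) q0); first by rewrite qs dvdn_mulr.
apply/orP; left; apply/orP; left.
case: (even_prime pp') => // e; move: ps'; rewrite e dvdn2 os //.
Qed.

Lemma nt_step n X Bv : 1 < n ->
  (exists U, coprime U n /\ X * Bv = X * U %[mod n]) \/
  (exists W, coprime W n /\ X * Bv * W = X * Bv %[mod n] /\ X * W != X %[mod n]) \/
  (~~ odd (n %/ gcdn X n) /\ odd (n %/ gcdn (X * Bv) n)).
Proof.
move=> n1; have n0 : 0 < n by apply: ltnW.
have g0 : 0 < gcdn X n by rewrite gcdn_gt0 n0 orbT.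
have h0 : 0 < gcdn (X * Bv) n by rewrite gcdn_gt0 n0 orbT.
have gh : gcdn X n %| gcdn (X * Bv) n.
  by rewrite dvdn_gcd dvdn_gcdr andbT dvdn_mulr // dvdn_gcdl.
case: (eqVneq (gcdn X n) (gcdn (X * Bv) n)) => [E|NE].
  left.
  set G := gcdn X n in g0 gh E.
  have en : n = n %/ G * G by rewrite divnK // /G dvdn_gcdr.
  have eX : X = X %/ G * G by rewrite divnK // /G dvdn_gcdl.
  have cB : coprime Bv (n %/ G).
    have : coprime (X %/ G * Bv) (n %/ G).
      rewrite /coprime -(eqn_pmul2r g0) mul1n muln_gcdl mulnAC -eX -en.
      by rewrite -E.
    by rewrite coprimeMl => /andP[].
  have nGn : n %/ G %| n by rewrite {2}en dvdn_mulr.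
  have [U [cU UB]] := lift_unit n0 nGn cB.
  exists U; split => //.
  rewrite {1 2}en {1 2}eX ![_ * G * _]mulnAC ![_ * G]mulnC -!muln_modr.
  by rewrite -modnMmr -UB modnMmr.
right.
set G := gcdn X n in g0 gh NE *.
set H := gcdn (X * Bv) n in h0 gh NE *.
set d := n %/ H; set q := H %/ G.
have eH : H = q * G by rewrite divnK.
have en : n = d * H by rewrite divnK // /H dvdn_gcdr.
have eD : n %/ G = q * d by rewrite en eH mulnA mulnK // mulnC.
have d0 : 0 < d by move: n0; rewrite en muln_gt0 => /andP[].
have q0 : 0 < q by move: h0; rewrite eH muln_gt0 => /andP[].
have q1 : 1 < q.
  case: (ltngtP q 1) => // [|q1]; first by rewrite ltnS leqn0 => /eqP q00; rewrite q00 in q0.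
  by move: NE; rewrite eH q1 mul1n eqxx.
case: (boolP ((q == 2) && odd d)) => [/andP[/eqP q2 od]|nex].
  by right; rewrite eD q2 mul2n odd_double od.
left.
have [k [qk ck]] := Kq q1 d0 nex.
have cD : coprime (1 + d * k) (n %/ G).
  rewrite eD coprimeMr ck /= coprime_sym /coprime.
  by rewrite addnC mulnC gcdnMDl gcdn1.
have Dn : n %/ G %| n by rewrite dvdn_div // /G dvdn_gcdr.
have [W [cW WD]] := lift_unit n0 Dn cD.
have W0 : 0 < W.
  by case: W cW {WD} => // ; rewrite /coprime gcd0n => /eqP n1'; rewrite n1' in n1.
exists W; split => //; split.
  apply/eqP; rewrite stab_mod // -/H -/d.
  have dD : d %| n %/ G by rewrite eD dvdn_mull.
  have : W = 1 %[mod d].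
    by rewrite -(modn_dvdm _ dD) WD (modn_dvdm _ dD) addnC mulnC modnMDl.
  by move/eqP; rewrite eqn_mod_dvd // subn1.
rewrite stab_mod // -/G.
apply/negP => DW.
have : 1 + d * k = 1 %[mod n %/ G].
  by rewrite -WD; apply/eqP; rewrite eqn_mod_dvd // subn1.
move/eqP; rewrite eqn_mod_dvd ?leq_addr // addKn eD [d * k]mulnC dvdn_pmul2r //.
by rewrite (negbTE qk).
Qed.

Import GRing.Theory.
Local Open Scope ring_scope.

Definition Iz (m : nat) (z : 'Z_m) : bool := odd (m %/ gcdn z m).

Lemma Zp_eqmod m (a c : nat) : (1 < m)%N ->
  ((a%:R : 'Z_m) = c%:R) <-> (a = c %[mod m])%N.
Proof.
move=> m1; split => [E|E].
  by have := congr1 (@nat_of_ord _) E; rewrite !val_Zp_nat.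
by apply: val_inj; rewrite /= !val_Zp_nat.
Qed.

Lemma Iz_nat m (a : nat) : (1 < m)%N -> Iz (a%:R : 'Z_m) = odd (m %/ gcdn a m).
Proof. by move=> m1; rewrite /Iz val_Zp_nat // gcdn_modl. Qed.

Lemma comp_step_nat m (X Bv : nat) : (1 < m)%N ->
  let x : 'Z_m := X%:R in let b : 'Z_m := Bv%:R in
  (exists u : 'Z_m, u \is a GRing.unit /\ x * b = x * u) \/
  (exists w : 'Z_m, w \is a GRing.unit /\ x * b * w = x * b /\ x * w != x) \/
  (~~ Iz x /\ Iz (x * b)).
Proof.
move=> m1 x b; rewrite /x /b.
case: (nt_step X Bv m1) => [[U [cU E]]|[[W [cW [E1 E2]]]|[I1 I2]]].
- left; exists U%:R; split; first by rewrite unitZpE // coprime_sym.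
  by rewrite -!natrM; apply/Zp_eqmod.
- right; left; exists W%:R; split; first by rewrite unitZpE // coprime_sym.
  rewrite -!natrM; split; first by apply/Zp_eqmod.
  by apply/negP => /eqP /(Zp_eqmod _ _ m1) /eqP; apply/negP.
- by right; right; rewrite -natrM !Iz_nat.
Qed.

Lemma comp_step m (x b : 'Z_m) : (1 < m)%N ->
  (exists u : 'Z_m, u \is a GRing.unit /\ x * b = x * u) \/
  (exists w : 'Z_m, w \is a GRing.unit /\ x * b * w = x * b /\ x * w != x) \/
  (~~ Iz x /\ Iz (x * b)).
Proof.
move=> m1; have := comp_step_nat (val x) (val b) m1.
by rewrite /= !natr_Zp.
Qed.

Lemma Iz_mono m (x b : 'Z_m) : (1 < m)%N -> Iz x -> Iz (x * b).
Proof.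
move=> m1; rewrite -(natr_Zp x) -(natr_Zp b) -natrM !Iz_nat //.
set X := nat_of_ord x; set Bv := nat_of_ord b.
have m0 : (0 < m)%N by apply: ltnW.
have g0 : (0 < gcdn X m)%N by rewrite gcdn_gt0 m0 orbT.
have gh : (gcdn X m %| gcdn (X * Bv) m)%N.
  by rewrite dvdn_gcd dvdn_gcdr andbT dvdn_mulr // dvdn_gcdl.
have dv : (m %/ gcdn (X * Bv) m %| m %/ gcdn X m)%N.
  set G := gcdn X m in g0 gh *; set H := gcdn (X * Bv) m in gh *.
  have eH : H = (H %/ G * G)%N by rewrite divnK.
  have em : m = (m %/ H * H)%N by rewrite divnK // /H dvdn_gcdr.
  by rewrite {2}em {3}eH mulnA mulnK // dvdn_mulr.
move=> o; apply: contraLR o; rewrite -!dvdn2 => d2.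
exact: dvdn_trans d2 dv.
Qed.

Lemma Iz_one m : (1 < m)%N -> ~~ Iz (1 : 'Z_m) -> (2 %| m)%N.
Proof.
move=> m1; have -> : (1 : 'Z_m) = (1%N)%:R by rewrite mulr1n.
by rewrite Iz_nat // gcd1n divn1 dvdn2.
Qed.

Lemma two_nonunit m : (1 < m)%N -> (2 %| m)%N -> ((2%:R : 'Z_m) \is a GRing.unit) = false.
Proof. by move=> m1 m2; rewrite unitZpE // coprimen2; apply/negbTE; rewrite -dvdn2. Qed.

Lemma half_fix m (d : 'Z_m) : (1 < m)%N -> (2 %| m)%N -> ~~ (4 %| m)%N ->
  d \is a GRing.unit -> d * 2%:R = 2%:R -> d = 1.
Proof.
move=> m1 m2 m4; rewrite -(natr_Zp d) unitZpE // -natrM => cd /(Zp_eqmod _ _ m1).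
set D := nat_of_ord d => E.
have Dm : (D < m)%N by rewrite -[X in (_ < X)%N](Zp_cast m1) ltn_ord.
set k := (m %/ 2)%N.
have mk : m = (k * 2)%N by rewrite divnK.
have ok : odd k.
  apply: contraR m4; rewrite -dvdn2 => k2.
  by rewrite mk (_ : 4 = 2 * 2)%N // dvdn_pmul2r.
have oD : odd D.
  apply: contraLR cd; rewrite -dvdn2 => D2.
  by rewrite /coprime; apply/negP => /eqP g1; move: (dvdn_gcd 2 m D); rewrite g1 m2 D2.
have D0 : (0 < D)%N by case: D oD {E Dm cd}.
have : (m %| D.-1 * 2)%N.
  move/eqP: E; rewrite eqn_mod_dvd; last by lia.
  by rewrite -subn1 mulnBl mul1n.
rewrite mk dvdn_pmul2r // => kD.
have : (k * 2 %| D.-1)%N.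
  rewrite Gauss_dvd ?coprimen2 // kD /= dvdn2.
  by move: oD; case: D {E Dm cd kD D0} => //= n; rewrite negbK.
rewrite -mk => mD.
have D1 : D = 1%N.
  case: (posnP D.-1) => [|pos]; first by lia.
  by have := dvdn_leq pos mD; lia.
by rewrite D1 mulr1n.
Qed.
Local Close Scope ring_scope.

Set Implicit Arguments. Unset Strict Implicit. Unset Printing Implicit Defensive.
Import GRing.Theory.


Notation prod n s := (seqsum (@mulR _ n) (oneR n) s).

Lemma mulRE r (n : 'I_r -> nat) (x y : ringR n) i : mulR x y i = (x i * y i)%R.
Proof. by rewrite ffunE. Qed.

Lemma oneRE r (n : 'I_r -> nat) i : oneR n i = 1%R.
Proof. by rewrite ffunE. Qed.

Lemma mulRA r (n : 'I_r -> nat) (x y z : ringR n) : mulR x (mulR y z) = mulR (mulR x y) z.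
Proof. by apply/ffunP => i; rewrite !mulRE mulrA. Qed.

Lemma mulRC r (n : 'I_r -> nat) (x y : ringR n) : mulR x y = mulR y x.
Proof. by apply/ffunP => i; rewrite !mulRE mulrC. Qed.

Lemma mul1R r (n : 'I_r -> nat) (x : ringR n) : mulR (oneR n) x = x.
Proof. by apply/ffunP => i; rewrite !mulRE oneRE mul1r. Qed.

Lemma mulR1 r (n : 'I_r -> nat) (x : ringR n) : mulR x (oneR n) = x.
Proof. by rewrite mulRC mul1R. Qed.

Lemma mulRCA r (n : 'I_r -> nat) (x y z : ringR n) : mulR x (mulR y z) = mulR y (mulR x z).
Proof. by rewrite !mulRA (mulRC x). Qed.

Lemma prodE r (n : 'I_r -> nat) (s : seq (ringR n)) i :
  prod n s i = (\prod_(a <- s) a i)%R.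
Proof.
elim: s => [|a s IH]; first by rewrite big_nil /seqsum /= oneRE.
by rewrite big_cons /seqsum /= mulRE -IH.
Qed.

Lemma prod_cons r (n : 'I_r -> nat) a (s : seq (ringR n)) :
  prod n (a :: s) = mulR a (prod n s).
Proof. by []. Qed.

Lemma prod_cat r (n : 'I_r -> nat) (s1 s2 : seq (ringR n)) :
  prod n (s1 ++ s2) = mulR (prod n s1) (prod n s2).
Proof.
elim: s1 => [|a s IH]; first by rewrite /= mul1R.
by rewrite cat_cons !prod_cons IH mulRA.
Qed.

Lemma prod_mask_split r (n : 'I_r -> nat) (s : seq (ringR n)) m :
  size m = size s ->
  prod n s = mulR (prod n (mask m s)) (prod n (mask (map negb m) s)).
Proof.
elim: s m => [|a s IH] [|b m] //=; first by rewrite mul1R.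
case=> sz; rewrite (IH m sz); case: b => /=.
  by rewrite mulRA.
by rewrite mulRCA.
Qed.

Lemma all_negb (m : bitseq) : all id (map negb m) = ~~ has id m.
Proof. by elim: m => [|b m IH] //=; rewrite IH negb_or. Qed.

Lemma is_unitP r (n : 'I_r -> nat) (x : ringR n) :
  reflect (forall i, x i \is a GRing.unit) (is_unit (@mulR r n) (oneR n) x).
Proof.
apply: (iffP existsP) => [[y /eqP E] i|H].
  by apply/unitrPr; exists (y i); rewrite -mulRE E oneRE.
exists [ffun i => ((x i)^-1)%R]; apply/eqP/ffunP => i.
by rewrite mulRE ffunE oneRE (mulrV (H i)).
Qed.

Lemma unit_mul r (n : 'I_r -> nat) (x y : ringR n) :
  is_unit (@mulR r n) (oneR n) x -> is_unit (@mulR r n) (oneR n) y ->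
  is_unit (@mulR r n) (oneR n) (mulR x y).
Proof.
move=> /is_unitP hx /is_unitP hy; apply/is_unitP => i.
by rewrite mulRE unitrM hx hy.
Qed.

Lemma unit_prod r (n : 'I_r -> nat) (s : seq (ringR n)) :
  all (is_unit (@mulR r n) (oneR n)) s -> is_unit (@mulR r n) (oneR n) (prod n s).
Proof.
elim: s => [|a s IH] /=.
  by move=> _; apply/is_unitP => i; rewrite oneRE unitr1.
by move=> /andP[ha hs]; apply: unit_mul => //; apply: IH.
Qed.

Lemma unit_cancel r (n : 'I_r -> nat) (x y : ringR n) :
  is_unit (@mulR r n) (oneR n) x -> mulR x y = x -> y = oneR n.
Proof.
move=> /is_unitP hx E; apply/ffunP => i.
have := congr1 (fun z : ringR n => z i) E; rewrite /= mulRE => E'.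
by rewrite oneRE -(mulKr (hx i) (y i)) E' (mulVr (hx i)).
Qed.

Definition RI r (n : 'I_r -> nat) (x : ringR n) (s : seq (ringR n)) : Prop :=
  forall m : bitseq, size m = size s -> ~~ all id m ->
    mulR x (prod n (mask m s)) <> mulR x (prod n s).

Definition ZF r (n : 'I_r -> nat) (x : ringR n) (W : seq (ringR n)) : Prop :=
  forall m : bitseq, size m = size W -> has id m -> mulR x (prod n (mask m W)) <> x.

Definition cnt r (n : 'I_r -> nat) (x y : ringR n) : nat :=
  #|[set i | ~~ Iz (x i) && Iz (y i)]|.

Lemma gstep r (n : 'I_r -> nat) (hn : forall i, (1 < n i)%N) (x a : ringR n) :
  (exists u, is_unit (@mulR r n) (oneR n) u /\ mulR x a = mulR x u) \/
  (exists w, is_unit (@mulR r n) (oneR n) w /\ mulR (mulR x a) w = mulR x a /\ mulR x w <> x) \/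
  (exists i, ~~ Iz (x i) && Iz (mulR x a i)).
Proof.
case: (boolP [forall i, [exists u : 'Z_(n i), (u \is a GRing.unit) && (x i * a i == x i * u)%R]])
   => [/forallP H | /forallPn [i /existsPn Hi]].
  left.
  pose u : ringR n := [ffun i => odflt 1%R [pick u : 'Z_(n i) | (u \is a GRing.unit) && (x i * a i == x i * u)%R]].
  have Pu : forall i, (u i \is a GRing.unit) && (x i * a i == x i * u i)%R.
    move=> i; rewrite /u ffunE; case: pickP => [v -> //|none].
    by have /existsP[v hv] := H i; rewrite none in hv.
  exists u; split.
    by apply/is_unitP => i; case/andP: (Pu i).
  by apply/ffunP => i; rewrite !mulRE; case/andP: (Pu i) => _ /eqP.
case: (comp_step (x i) (a i) (hn i)) => [[v [hv e]]|[[w [hw [e1 e2]]]|[I1 I2]]].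
- by have := Hi v; rewrite hv e eqxx.
- right; left.
  pose w' : ringR n := [ffun j => odflt 1%R [pick z : 'Z_(n j) | (j == i) &&
      [&& (z \is a GRing.unit), (x j * a j * z == x j * a j)%R & (x j * z != x j)%R]]].
  have Pi : [&& (w' i \is a GRing.unit), (x i * a i * w' i == x i * a i)%R & (x i * w' i != x i)%R].
    rewrite /w' ffunE; case: pickP => [z /andP[_ ->] //|none].
    by have := none w; rewrite eqxx hw e1 e2 eqxx.
  have Pj : forall j, j != i -> w' j = 1%R.
    move=> j ji; rewrite /w' ffunE; case: pickP => [z /andP[/eqP ji' _]|//].
    by rewrite ji' eqxx in ji.
  exists w'; split.
    apply/is_unitP => j; case: (eqVneq j i) => [->|ji]; first by case/and3P: Pi.
    by rewrite Pj // unitr1.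
  split.
    apply/ffunP => j; rewrite !mulRE; case: (eqVneq j i) => [->|ji].
      by case/and3P: Pi => _ /eqP.
    by rewrite Pj // mulr1.
  move=> E; have := congr1 (fun z : ringR n => z i) E; rewrite /= mulRE => E'.
  by case/and3P: Pi => _ _; rewrite E' eqxx.
- by right; right; exists i; rewrite mulRE I1 I2.
Qed.

Lemma mask_swap r (n : 'I_r -> nat) (x a u : ringR n) (s : seq (ringR n)) :
  mulR x a = mulR x u -> forall B m,
  mulR x (prod n (mask m (B ++ a :: s))) = mulR x (prod n (mask m (B ++ u :: s))).
Proof.
move=> E; elim=> [|c B IH] [|b m] //=.
  by case: b => //=; rewrite !mulRA E.
by case: b => //=; rewrite !(mulRCA x) IH.
Qed.

Lemma prod_swap r (n : 'I_r -> nat) (x a u : ringR n) (B s : seq (ringR n)) :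
  mulR x a = mulR x u ->
  mulR x (prod n (B ++ a :: s)) = mulR x (prod n (B ++ u :: s)).
Proof.
move=> E; have := mask_swap s E B (nseq (size (B ++ a :: s)) true).
by rewrite !mask_true // !size_cat.
Qed.

Lemma RI_swap r (n : 'I_r -> nat) (x a u : ringR n) (B s : seq (ringR n)) :
  mulR x a = mulR x u -> RI x (B ++ a :: s) -> RI x (B ++ u :: s).
Proof.
move=> E H m sz nall.
rewrite -(mask_swap s E) -(prod_swap _ _ E); apply: H nall.
by rewrite sz !size_cat.
Qed.

Lemma prod_ins r (n : 'I_r -> nat) (a : ringR n) (B s : seq (ringR n)) :
  prod n (B ++ a :: s) = mulR a (prod n (B ++ s)).
Proof. by rewrite !prod_cat prod_cons mulRCA. Qed.

Lemma mask_ins r (n : 'I_r -> nat) (a : ringR n) (s : seq (ringR n)) : forall B m,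
  size m = size (B ++ s) -> exists m', [/\ size m' = size (B ++ a :: s),
    all id m' = all id m & prod n (mask m' (B ++ a :: s)) = mulR a (prod n (mask m (B ++ s)))].
Proof.
elim=> [|c B IH] m sz.
  by exists (true :: m); split => //=; rewrite sz.
case: m sz => [|b m] //= [sz].
have [m' [sz' am pm]] := IH m sz.
exists (b :: m'); split => /=; first by rewrite sz'.
  by rewrite am.
by case: b => //=; rewrite pm mulRCA.
Qed.

Lemma RI_drop r (n : 'I_r -> nat) (x a : ringR n) (B s : seq (ringR n)) :
  RI x (B ++ a :: s) -> RI (mulR x a) (B ++ s).
Proof.
move=> H m sz nall.
have [m' [sz' am pm]] := @mask_ins _ _ a s B m sz.
have := H m' sz'; rewrite am => /(_ nall); rewrite pm prod_ins -!mulRA.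
done.
Qed.

Lemma mask_nohas T (m : bitseq) (s : seq T) : ~~ has id m -> mask m s = [::].
Proof. by elim: m s => [|b m IH] [|c s] //=; case: b => //= /IH ->. Qed.

Lemma negbKs (m : bitseq) : map negb (map negb m) = m.
Proof. by elim: m => //= b m ->; rewrite negbK. Qed.

Lemma RI_ZF r (n : 'I_r -> nat) (x : ringR n) (B : seq (ringR n)) : RI x B -> ZF x B.
Proof.
move=> H m sz hm E.
have sz' : size (map negb m) = size B by rewrite size_map.
apply: (H _ sz'); first by rewrite all_negb hm.
by rewrite (prod_mask_split sz') negbKs mulRCA E mulRC.
Qed.

Lemma ZF_weak r (n : 'I_r -> nat) (x a : ringR n) W : ZF (mulR x a) W -> ZF x W.
Proof.
move=> H m sz hm E; apply: (H m sz hm).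
by rewrite -mulRA (mulRC a) mulRA E.
Qed.

Lemma ZF_cons r (n : 'I_r -> nat) (x a w : ringR n) W :
  ZF (mulR x a) W -> mulR (mulR x a) w = mulR x a -> mulR x w <> x -> ZF x (w :: W).
Proof.
move=> H E1 E2 [|b m] //= [sz]; case: b => /= hm E.
  case hm': (has id m).
    by apply: (H m sz hm'); rewrite -{1}E1 -!mulRA mulRCA E mulRC.
  by apply: E2; move: E; rewrite mask_nohas ?hm' // mulR1.
by apply: (H m sz hm); rewrite -mulRA (mulRC a) mulRA E.
Qed.

Lemma cnt_le r (n : 'I_r -> nat) (hn : forall i, (1 < n i)%N) (x a P : ringR n) :
  (cnt (mulR x a) P <= cnt x P)%N.
Proof.
apply: subset_leq_card; apply/subsetP => i; rewrite !inE => /andP[h1 ->].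
rewrite andbT; apply: contra h1 => h; rewrite mulRE; exact: Iz_mono.
Qed.

Lemma cnt_lt r (n : 'I_r -> nat) (hn : forall i, (1 < n i)%N) (x a y : ringR n) i :
  ~~ Iz (x i) && Iz (mulR x a i) ->
  (cnt (mulR x a) (mulR (mulR x a) y) < cnt x (mulR (mulR x a) y))%N.
Proof.
move=> /andP[h1 h2].
rewrite /cnt [X in (_ < X)%N](cardsD1 i).
rewrite inE h1 /= mulRE Iz_mono // add1n ltnS.
apply: subset_leq_card; apply/subsetP => j; rewrite !inE => /andP[h3 ->].
rewrite andbT; apply/andP; split.
  by apply: contraNneq h3 => ->.
by apply: contra h3 => h; rewrite mulRE; exact: Iz_mono.
Qed.

Lemma claim r (n : 'I_r -> nat) (hn : forall i, (1 < n i)%N) (s : seq (ringR n)) :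
  forall (x : ringR n) (B : seq (ringR n)),
  all (is_unit (@mulR r n) (oneR n)) B -> RI x (B ++ s) ->
  exists W, [/\ all (is_unit (@mulR r n) (oneR n)) W, ZF x W &
    (size B + size s <= size W + cnt x (mulR x (prod n (B ++ s))))%N].
Proof.
elim: s => [|a s IH] x B hB hRI.
  exists B; split => //; first by apply: RI_ZF; rewrite cats0 in hRI.
  by rewrite addn0 leq_addr.
case: (gstep hn x a) => [[u [hu E]]|[[w [hw [E1 E2]]]|[i hi]]].
- have hB' : all (is_unit (@mulR r n) (oneR n)) (rcons B u) by rewrite all_rcons hu hB.
  have hRI' : RI x (rcons B u ++ s) by rewrite cat_rcons; apply: RI_swap E hRI.
  have [W [hW hZ hsz]] := IH x (rcons B u) hB' hRI'.
  exists W; split => //.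
  move: hsz; rewrite cat_rcons -(prod_swap _ _ E) size_rcons /=.
  by rewrite addSnnS.
- have [W [hW hZ hsz]] := IH (mulR x a) B hB (RI_drop hRI).
  exists (w :: W); split; first by rewrite /= hw hW.
    exact: ZF_cons hZ E1 E2.
  rewrite prod_ins mulRA /= addnS -addSn ltnS.
  by apply: (leq_trans hsz); rewrite leq_add2l cnt_le.
- have [W [hW hZ hsz]] := IH (mulR x a) B hB (RI_drop hRI).
  exists W; split => //; first exact: ZF_weak hZ.
  rewrite prod_ins mulRA /= addnS.
  by apply: (leq_ltn_trans hsz); rewrite ltn_add2l (cnt_lt hn _ hi).
Qed.

Lemma irred_RI r (n : 'I_r -> nat) (s : seq (ringR n)) :
  ~ reducible (@mulR r n) (oneR n) s -> RI (oneR n) s.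
Proof.
move=> H m sz nall E; apply: H; exists m; split => //.
by rewrite !mul1R in E.
Qed.

Lemma has_negb (m : bitseq) : has id (map negb m) = ~~ all id m.
Proof. by elim: m => [|b m IH] //=; rewrite IH negb_and. Qed.

Lemma ZF_irred r (n : 'I_r -> nat) (W : seq (ringR n)) :
  all (is_unit (@mulR r n) (oneR n)) W -> ZF (oneR n) W ->
  ~ reducible (@mulR r n) (oneR n) W.
Proof.
move=> hW hZ [m [sz nall E]].
have sz' : size (map negb m) = size W by rewrite size_map.
apply: (hZ _ sz'); first by rewrite has_negb.
rewrite mul1R; apply: (unit_cancel (unit_prod hW)).
by rewrite [RHS](prod_mask_split sz) E.
Qed.

Lemma cnt_one r (n : 'I_r -> nat) (hn : forall i, (1 < n i)%N) (P : ringR n) :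
  (cnt (oneR n) P <= #|[set i : 'I_r | 2 %| n i]|)%N.
Proof.
apply: subset_leq_card; apply/subsetP => i; rewrite !inE oneRE => /andP[h _].
exact: Iz_one.
Qed.

Lemma min_exists (P : nat -> Prop) : forall N, P N ->
  exists l, P l /\ (forall l', P l' -> (l <= l')%N).
Proof.
elim/ltn_ind => N IH PN.
case: (Classical_Prop.classic (exists l', P l' /\ (l' < N)%N)) => [[l' [Pl' lt]]|no].
  exact: IH lt Pl'.
exists N; split => // l' Pl'; rewrite leqNgt; apply/negP => lt.
by apply: no; exists l'.
Qed.

Lemma red_block r (n : 'I_r -> nat) (s1 s2 s3 : seq (ringR n)) :
  s2 != [::] -> prod n s1 = prod n (s1 ++ s2) ->
  reducible (@mulR r n) (oneR n) (s1 ++ s2 ++ s3).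
Proof.
move=> ne E.
exists (nseq (size s1) true ++ nseq (size s2) false ++ nseq (size s3) true); split.
- by rewrite !size_cat !size_nseq.
- rewrite !all_cat !all_nseq /= !orbT /= andbT.
  by rewrite orbF size_eq0.
- rewrite !mask_cat ?size_nseq // !mask_true // mask_false /=.
  by rewrite [LHS]prod_cat E -prod_cat catA.
Qed.

Lemma long_red r (n : 'I_r -> nat) (s : seq (ringR n)) :
  (#|ringR n| <= size s)%N -> reducible (@mulR r n) (oneR n) s.
Proof.
move=> hs.
pose f : 'I_(size s).+1 -> ringR n := fun k => prod n (take k s).
have : ~~ injectiveb f.
  apply/injectiveP => inj; have := @leq_card _ _ f inj; rewrite card_ord.
  move=> h; have := leq_trans h hs; by rewrite ltnn.
move/injectivePn => [k1 [k2 ne E]].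
rewrite /f /= in E.
have [i [j [ij jl Eij]]] : exists i j, [/\ (i < j)%N, (j <= size s)%N &
    prod n (take i s) = prod n (take j s)].
  case: (ltngtP k1 k2) => [lt|lt|eq]; last by rewrite (val_inj eq) eqxx in ne.
    exists k1, k2; split; [exact: lt | by rewrite -ltnS ltn_ord | exact: E].
  exists k2, k1; split; [exact: lt | by rewrite -ltnS ltn_ord | exact: (esym E)].
have -> : s = take i s ++ take (j - i) (drop i s) ++ drop j s.
  by rewrite catA -takeD (subnKC (ltnW ij)) cat_take_drop.
apply: red_block.
  rewrite -size_eq0 size_take size_drop.
  case: ifP => _; rewrite subn_eq0 -ltnNge.
    exact: ij.
  exact: leq_trans ij jl.
rewrite -takeD (subnKC (ltnW ij)); exact: Eij.
Qed.

Lemma dav_exists r (n : 'I_r -> nat) (A : {pred ringR n}) :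
  exists l, is_davenport (@mulR r n) (oneR n) A l.
Proof.
have := @min_exists (fun l => (0 < l)%N /\ all_long_reducible (@mulR r n) (oneR n) A l)
  #|ringR n|.+1.
case.
  split => // s _ hs; apply: long_red; exact: ltnW.
move=> l [[l0 hl] hmin]; exists l; split => // l' l'0 hl'.
exact: hmin.
Qed.

Definition e2 r (n : 'I_r -> nat) (i : 'I_r) : ringR n :=
  [ffun j => if j == i then (2%:R)%R else 1%R].

Lemma prod_e2 r (n : 'I_r -> nat) (l : seq 'I_r) i : uniq l ->
  prod n (map (@e2 r n) l) i = if i \in l then (2%:R)%R else 1%R.
Proof.
rewrite prodE big_map; elim: l => [|j l IH] /=; first by rewrite big_nil.
move=> /andP[jl ul]; rewrite big_cons IH // ffunE in_cons.
case: (eqVneq i j) => [->|ij] /=; last by rewrite mul1r.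
by rewrite (negbTE jl) mulr1.
Qed.

Lemma drop_witness (T : eqType) (L : seq T) (m : bitseq) :
  uniq L -> size m = size L -> ~~ all id m -> exists i, i \in L /\ i \notin mask m L.
Proof.
elim: L m => [|y L IH] [|b m] //= /andP[yL uL] [sz]; case: b => /= h.
  have [i [iL im]] := IH m uL sz h.
  exists i; split; first by rewrite in_cons iL orbT.
  rewrite in_cons negb_or im andbT; apply: contraNneq yL => <-; exact: iL.
exists y; split; first by rewrite in_cons eqxx.
by apply: contra yL; apply: mem_mask.
Qed.

Lemma all_mask (T : eqType) (a : pred T) (m : bitseq) (s : seq T) : all a s -> all a (mask m s).
Proof. by move=> /allP h; apply/allP => x xm; apply: h; apply: mem_mask xm. Qed.

Lemma mask_all T (m : bitseq) (s : seq T) : size m = size s -> all id m -> mask m s = s.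
Proof. by elim: m s => [|b m IH] [|x s] //= [sz] /andP[-> h] /=; rewrite IH. Qed.

Lemma lower_irred r (n : 'I_r -> nat) (hn : forall i, (1 < n i)%N) (P : {set 'I_r})
  (s : seq (ringR n)) :
  (forall i, i \in P -> (2 %| n i) && ~~ (4 %| n i))%N ->
  all (is_unit (@mulR r n) (oneR n)) s -> ~ reducible (@mulR r n) (oneR n) s ->
  ~ reducible (@mulR r n) (oneR n) (s ++ map (@e2 r n) (enum P)).
Proof.
move=> hP hs irr [m [sz nall E]].
have uL := enum_uniq (mem P).
set L := enum P in uL *.
have sz1 : size (take (size s) m) = size s by rewrite size_takel // sz size_cat leq_addr.
have sz2 : size (drop (size s) m) = size L by rewrite size_drop sz size_cat size_map addKn.
move: nall E; rewrite -(cat_take_drop (size s) m).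
set m1 := take (size s) m in sz1 *; set m2 := drop (size s) m in sz2 *.
rewrite mask_cat ?sz1 // all_cat (@prod_cat r n (mask m1 s)) (@prod_cat r n s) -map_mask => nall E.
have hs1 : all (is_unit (@mulR r n) (oneR n)) (mask m1 s) by apply: all_mask.
have /is_unitP u1 := unit_prod hs1.
case: (boolP (all id m2)) => [a2|na2].
  rewrite a2 andbT in nall.
  rewrite (mask_all sz2 a2) in E.
  pose d := prod n (mask (map negb m1) s).
  have hd : all (is_unit (@mulR r n) (oneR n)) (mask (map negb m1) s) by apply: all_mask.
  have /is_unitP ud := unit_prod hd.
  have d1 : d = oneR n.
    apply/ffunP => i; rewrite oneRE.
    have := congr1 (fun z : ringR n => z i) E.
    rewrite /= (prod_mask_split sz1) !mulRE -/d prod_e2 //.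
    rewrite -mulrA => /(mulrI (u1 i)) /esym.
    case: ifP => iL.
      move=> h; apply: (half_fix (hn i)) => //.
        by have := hP i; rewrite -(mem_enum (mem P)) iL => /(_ isT) /andP[].
        by have := hP i; rewrite -(mem_enum (mem P)) iL => /(_ isT) /andP[].
    by rewrite mulr1.
  apply: irr; exists m1; split => //.
  by rewrite [RHS](prod_mask_split sz1) -/d d1 mulR1.
have [i [iL im]] := drop_witness uL sz2 na2.
have := congr1 (fun z : ringR n => z i) E.
rewrite /= !mulRE !prod_e2 ?mask_uniq // iL (negbTE im) mulr1 => h.
have : (prod n s i * (2%:R)%R)%R \is a GRing.unit by rewrite -h u1.
have i2 : (2 %| n i)%N by have := hP i; rewrite -(mem_enum (mem P)) iL => /(_ isT) /andP[].
by rewrite unitrM two_nonunit // andbF.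
Qed.

Theorem theorem1p1 (r : nat) (n : 'I_r -> nat) :
  1 <= r -> (forall i, 1 < n i) ->
  exists dS dU : nat,
    [/\ is_davenport (@mulR r n) (oneR n) predT dS,
        is_davenport (@mulR r n) (oneR n) (is_unit (@mulR r n) (oneR n)) dU,
        dU + #|[set i : 'I_r | (2 %| n i) && ~~ (4 %| n i)]| <= dS
      & dS <= dU + #|[set i : 'I_r | 2 %| n i]|].
Proof.
move=> _ hn.
have [dS hS] := @dav_exists r n predT.
have [dU hU] := @dav_exists r n (is_unit (@mulR r n) (oneR n)).
exists dS, dU; split => //.
- case: hU => [dU0 alrU minU]; case: hS => [dS0 alrS minS].
  have [s [hs irr sz]] : exists s, [/\ all (is_unit (@mulR r n) (oneR n)) s,
      ~ reducible (@mulR r n) (oneR n) s & dU.-1 <= size s].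
    case: (posnP dU.-1) => [e0|pos].
      exists [::]; split => //; first by case=> m [sz nall _]; case: m sz nall.
      by rewrite e0.
    apply: Classical_Prop.NNPP => no.
    have : dU <= dU.-1.
      apply: minU => // s hs sz.
      case: (Classical_Prop.classic (reducible (@mulR r n) (oneR n) s)) => // nr.
      exfalso; apply: no; exists s; split => //.
    by rewrite -{1}(prednK dU0) ltnn.
  set P := [set i : 'I_r | (2 %| n i) && ~~ (4 %| n i)].
  have hP : forall i, i \in P -> (2 %| n i) && ~~ (4 %| n i) by move=> i; rewrite inE.
  have irr' := lower_irred hn hP hs irr.
  have : size (s ++ map (@e2 r n) (enum P)) < dS.
    rewrite ltnNge; apply/negP => le.
    by apply: irr'; apply: alrS le; apply/allP.
  rewrite size_cat size_map -cardE => lt.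
  have := leq_ltn_trans (leq_add sz (leqnn #|P|)) lt.
  by rewrite -{2}(prednK dU0) addSn.
- case: hU => [dU0 alrU minU]; case: hS => [dS0 alrS minS].
  apply: minS; first by rewrite addn_gt0 dU0.
  move=> s _ sz.
  case: (Classical_Prop.classic (reducible (@mulR r n) (oneR n) s)) => // nr.
  have [W [hW hZ hsz]] := @claim r n hn s (oneR n) [::] isT (irred_RI nr).
  exfalso; apply: (ZF_irred hW hZ); apply: alrU.
    by apply: sub_all hW.
  have h2 := leq_trans sz hsz.
  have h1 := cnt_one hn (mulR (oneR n) (prod n ([::] ++ s))).
  have := leq_trans h2 (leq_add (leqnn (size W)) h1).
  by rewrite leq_add2r.
Qed.
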